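(* Let $n\ge 2$ and let $k_1,\dots,k_n$, $a_1,\dots,a_{n-1}$, $b_1,\dots,b_n$ be real or complex numbers. Let $A_1$ be the $n\times n$ matrix with entries $$(A_1)_{ij}=\begin{cases} k_i b_j, & i\le j,\\ k_j a_j, & i>j.\end{cases}$$ Then $$\det(A_1)=k_1b_n\,(k_2b_1-k_1a_1)(k_3b_2-k_2a_2)\cdots(k_nb_{n-1}-k_{n-1}a_{n-1}).$$ In particular, $A_1$ is singular if $k_1=0$, or $b_n=0$, or $k_{i+1}b_i-k_ia_i=0$ for some $i\in\{1,\dots,n-1\}$. *)

(* Defs.v *)
From mathcomp Require Import all_boot all_order all_algebra.
Set Implicit Arguments. Unset Strict Implicit. Unset Printing Implicit Defensive.
Import GRing.Theory.
Local Open Scope ring_scope.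

(* Indices are 0-based: k_i, b_i (i = 0..n-1), a_i (i = 0..n-2) correspond
   to the paper's k_{i+1}, b_{i+1}, a_{i+1}. *)
Definition A1 (R : ringType) (n : nat) (k a b : nat -> R) : 'M[R]_n :=
  \matrix_(i < n, j < n) if (i <= j)%N then k i * b j else k j * a j.

(* Main.v *)
Require Import Defs.
From mathcomp Require Import all_boot all_order all_algebra.
From mathcomp Require Import zify ring.
Import GRing.Theory.
Local Open Scope ring_scope.

Section S.
Variables (R : fieldType) (k a b : nat -> R).

Definition Nm (m : nat) : 'M[R]_m := \matrix_(i < m, j < m)
  if (j == m.-1 :> nat) then k i else (if (i <= j)%N then k i * b j else k j * a j).

Lemma N_rec m : \det (Nm m.+2) = (k m.+1 * b m - k m * a m) * \det (Nm m.+1).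
Proof.
set E : 'M[R]_(m.+2) := \matrix_(i, j)
  ((i == j)%:R - ((i == ord_max) && (j == inord m))%:R * b m).
have im : (inord m : 'I_m.+2) = m :> nat by rewrite inordK // ltnS leqnSn.
have dE : \det E = 1.
  rewrite det_trig; last first.
    apply/is_trig_mxP => i j lt; rewrite mxE.
    have -> : (i == j) = false by apply/negbTE; rewrite neq_ltn lt.
    have -> : (i == ord_max) = false.
      by apply/negbTE; rewrite neq_ltn /= (leq_trans lt) // -ltnS.
    by rewrite mul0r subr0.
  apply: big1 => i _; rewrite mxE eqxx.
  case: (i =P ord_max) => [-> | _] /=; last by rewrite mul0r subr0.
  have -> : (ord_max == inord m :> 'I_m.+2) = false.
    by apply/negbTE/eqP => /(congr1 val); rewrite /= im => /esym /n_Sn.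
  by rewrite mul0r subr0.
have NE : forall i j, (Nm m.+2 *m E) i j
    = Nm m.+2 i j - (j == inord m)%:R * b m * Nm m.+2 i ord_max.
  move=> i j; rewrite mxE.
  under eq_bigr do rewrite [E _ _]mxE mulrBr.
  rewrite sumrB (bigD1 j) //= big1 ?addr0; last first.
    by move=> l /negbTE ->; rewrite mulr0.
  rewrite eqxx mulr1 (bigD1 ord_max) //= big1 ?addr0; last first.
    by move=> l /negbTE ->; rewrite mul0r mulr0.
  by rewrite eqxx /= [X in _ - X]mulrC.
have -> : \det (Nm m.+2) = \det (Nm m.+2 *m E) by rewrite det_mulmx dE mulr1.
rewrite (expand_det_col _ (inord m)) (bigD1 ord_max) //= big1 ?addr0; last first.
  move=> i ni; rewrite NE eqxx mul1r !mxE /= im eqxx.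
  have -> : (m == m.+1) = false by rewrite (ltn_eqF (ltnSn m)).
  have -> : (i <= m)%N.
    have hi : (i : nat) != m.+1 by apply: contraNneq ni => h; apply/eqP; apply: val_inj.
    by have := ltn_ord i; lia.
  by rewrite [b m * _]mulrC subrr mul0r.
rewrite /cofactor.
have -> : row' ord_max (col' (inord m) (Nm m.+2 *m E)) = Nm m.+1.
  apply/matrixP => i j; rewrite [LHS]mxE [LHS]mxE NE.
  have -> : (lift (inord m) j == inord m) = false.
    by apply/negbTE; rewrite eq_sym; apply: neq_lift.
  rewrite !mul0r subr0 !mxE /= /bump /= im.
  have hi : (m < i)%N = false by rewrite ltnNge -ltnS ltn_ord.
  rewrite hi /= add0n.
  case: (ltngtP j m) => h.
  - by rewrite /= add0n (ltn_eqF (ltn_trans h (ltnSn m))).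
  - by have := ltn_ord j; rewrite ltnS leqNgt h.
  - by rewrite /= add1n h eqxx.
rewrite NE eqxx mul1r !mxE /= im eqxx.
have -> : (m == m.+1) = false by rewrite (ltn_eqF (ltnSn m)).
rewrite ltnn /= addSn exprS -signr_odd addnn odd_double expr0 mulr1.
ring.
Qed.


Lemma N_det m : \det (Nm m.+1) = k 0 * \prod_(i < m) (k i.+1 * b i - k i * a i).
Proof.
elim: m => [|m IH].
  by rewrite det_mx11 mxE /= big_ord0 mulr1.
by rewrite N_rec IH big_ord_recr /=; ring.
Qed.

Lemma A1_N m : A1 m.+2 k a b =
  Nm m.+2 *m diag_mx (\row_(j < m.+2) (if j == m.+1 :> nat then b m.+1 else 1)).
Proof.
apply/matrixP => i j; rewrite mul_mx_diag !mxE /=.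
case: eqP => [-> | _]; last by rewrite mulr1.
have -> : (i <= m.+1)%N by rewrite -ltnS ltn_ord.
by rewrite mulrC.
Qed.
End S.

Theorem mainTheorem2 (R : fieldType) (n : nat) (k a b : nat -> R) :
  (2 <= n)%N ->
  \det (A1 n k a b) =
    k 0%N * b n.-1 * \prod_(i < n.-1) (k i.+1 * b i - k i * a i)
  /\ ((k 0%N = 0 \/ b n.-1 = 0 \/
       exists i : nat, (i < n.-1)%N /\ k i.+1 * b i - k i * a i = 0) ->
      \det (A1 n k a b) = 0).
Proof.
case: n => [|[|m]] // _ /=.
have D : \det (A1 m.+2 k a b) =
    k 0%N * b m.+1 * \prod_(i < m.+1) (k i.+1 * b i - k i * a i).
  rewrite A1_N det_mulmx det_diag (bigD1 ord_max) //= big1.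
    by rewrite N_det !mxE /= eqxx mulr1; ring.
  by move=> j nj; rewrite mxE ifN //; apply: contra nj => /eqP h; apply/eqP/val_inj.
split => // H; rewrite D.
case: H => [-> | [-> | [i [hi H0]]]]; rewrite ?(mul0r, mulr0) //.
by rewrite (bigD1 (Ordinal hi)) //= H0 mul0r mulr0.
Qed.
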